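(* In the setting below with $P=\mathfrak A$ and the normalized error criterion, suppose $\{S_d\}$ is polynomially tractable with constants $C,p>0$, $q\ge0$. Then $\lambda\in\ell_\tau$ for all $\tau>p/2$; $\epsilon_d^{\rm init}$ tends to zero faster than the inverse of any polynomial as $d\to\infty$ (i.e. $\lambda_{d,\psi(1)}\mathcal P(d)\to0$ for every polynomial $\mathcal P$ positive on $\mathbb N$); $b_d\in O(\ln d)$; and hence $\lim_{d\to\infty}a_d/d=1$. If moreover $\{S_d\}$ is strongly polynomially tractable, then $b_d\in O(1)$.
   Context: Setting: $S_1:H_1\to G_1$ is a compact linear operator between real Hilbert spaces ($H_1$ infinite-dimensional separable); $\lambda=(\lambda_m)_{m\in\mathbb N}$, $\lambda_1\ge\lambda_2\ge\dots\ge0$, are the eigenvalues of $S_1^\dagger S_1$. $S_d=S_1^{\otimes d}:H_1^{\otimes d}\to G_1^{\otimes d}$. For each $d$ fix $\emptyset\ne I_d=\{i_1<\dots<i_{a_d}\}\subset\{1,\dots,d\}$ ($I_1=\{1\}$), put $a_d=\#I_d$, $b_d=d-a_d$, and fix one type $P\in\{\mathfrak S,\mathfrak A\}$ for all $d$; the problem $\{S_d\}$ is the family of restrictions of $S_d$ to the $I_d$-symmetric subspace (if $P=\mathfrak S$) or $I_d$-antisymmetric subspace (if $P=\mathfrak A$) of $H_1^{\otimes d}$, i.e. the range of $\frac1{a_d!}\sum_{\pi}(\pm1)U_\pi$, the sum over permutations $\pi$ of $\{1,\dots,d\}$ fixing all points outside $I_d$, $U_\pi(f_1\otimes\cdots\otimes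 f_d)=f_{\pi(1)}\otimes\cdots\otimes f_{\pi(d)}$, sign $(-1)^{|\pi|}$ used for $\mathfrak A$. Let $\nabla_d=\{k\in\mathbb N^d:k_{i_1}\le\dots\le k_{i_{a_d}}\}$ for $P=\mathfrak S$ and with strict inequalities for $P=\mathfrak A$; $\lambda_{d,k}=\prod_{l=1}^d\lambda_{k_l}$; $\psi:\mathbb N\to\nabla_d$ a bijection with $\lambda_{d,\psi(1)}\ge\lambda_{d,\psi(2)}\ge\cdots$. These are exactly the eigenvalues of $S_d^\dagger S_d$ on the subspace, and the information complexity is $n(\epsilon,d)=\#\{k\in\nabla_d:\lambda_{d,k}>\epsilon^2\}$, the initial error $\epsilon^{\rm init}_d=\sqrt{\lambda_{d,\psi(1)}}$ (equal to $\lambda_1^{d/2}$ if $P=\mathfrak S$, and $\sqrt{\lambda_1^{b_d}\lambda_1\lambda_2\cdots\lambda_{a_d}}$ if $P=\mathfrak A$). Normalized error criterion: polynomially tractable means $\exists C,p>0,q\ge0$ with $n(\epsilon'\epsilon_d^{\rm init},d)\le C(\epsilon')^{-p}d^q$ for all $d\in\mathbb N,\epsilon'\in(0,1]$; strongly polynomially tractable: this with $q=0$. Standing assumptions: $\lambda_2>0$ and $\epsilon_d^{\rm init}>0$ for all $d$. $\ell_\tau$: sequences with $\sum_m\lambda_m^\tau<\infty$. *)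

(* Defs.v *)
From Stdlib Require Import Reals Lra Lia List.
Import ListNotations.
Open Scope R_scope.

(* Eigenvalue sequence: lam 0 = lambda_1, lam 1 = lambda_2, ... (0-indexed).
   Index sets: I d i = true  iff  position i+1 (0 <= i < d) belongs to I_d.
   Multi-indices k in N^d: lists of length d of 0-indexed eigenvalue indices. *)

Definition a_card (I : nat -> nat -> bool) (d : nat) : nat :=
  length (filter (I d) (seq 0 d)).

Definition b_card (I : nat -> nat -> bool) (d : nat) : nat := (d - a_card I d)%nat.

Definition in_nabla_A (I : nat -> nat -> bool) (d : nat) (k : list nat) : Prop :=
  length k = d /\
  forall i j : nat, (i < j)%nat -> (j < d)%nat -> I d i = true -> I d j = true ->
    (nth i k 0 < nth j k 0)%nat.

Definition lam_prod (lam : nat -> R) (k : list nat) : R :=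
  fold_right (fun m acc => lam m * acc) 1 k.

(* (eps_d^init)^2 = lambda_{d,psi(1)} = lambda_1^{b_d} * lambda_1 * ... * lambda_{a_d}  (P = A) *)
Definition init_sq (lam : nat -> R) (I : nat -> nat -> bool) (d : nat) : R :=
  lam 0%nat ^ b_card I d * fold_right Rmult 1 (map lam (seq 0 (a_card I d))).

(* n(eps,d) <= N, where n(eps,d) = #{k in nabla_d : lambda_{d,k} > t}, t = eps^2:
   every duplicate-free finite list of such k has length <= N. *)
Definition info_le (lam : nat -> R) (I : nat -> nat -> bool) (d : nat) (t N : R) : Prop :=
  forall L : list (list nat), NoDup L ->
    (forall k, In k L -> in_nabla_A I d k /\ lam_prod lam k > t) ->
    INR (length L) <= N.

Definition poly_tractable_with (lam : nat -> R) (I : nat -> nat -> bool) (C p q : R) : Prop :=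
  forall (d : nat) (e : R), (1 <= d)%nat -> 0 < e <= 1 ->
    info_le lam I d (e ^ 2 * init_sq lam I d) (C * Rpower e (- p) * Rpower (INR d) q).

Definition strongly_poly_tractable (lam : nat -> R) (I : nat -> nat -> bool) : Prop :=
  exists C p : R, 0 < C /\ 0 < p /\ poly_tractable_with lam I C p 0.

Definition rpow0 (x tau : R) : R :=
  if Rlt_dec 0 x then Rpower x tau else 0.

Definition poly_eval (cs : list R) (x : R) : R :=
  fold_right (fun c acc => c + x * acc) 0 cs.

(* Main.v *)
Require Import Defs.
From Stdlib Require Import Reals Lra Lia List.
Import ListNotations.
Open Scope R_scope.

Fixpoint build (J : nat -> bool) (i0 n r : nat) (v : list nat) : list nat :=
  match n with
  | O => []
  | S n' => if J i0 then r :: build J (S i0) n' (S r) v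
            else hd 0%nat v :: build J (S i0) n' r (tl v)
  end.

Lemma build_length J n : forall i0 r v, length (build J i0 n r v) = n.
Proof. induction n; intros; simpl; [reflexivity|]. destruct (J i0); simpl; rewrite IHn; reflexivity. Qed.

Lemma build_ge J n : forall i0 r v a, (a < n)%nat -> J (i0 + a)%nat = true ->
  (r <= nth a (build J i0 n r v) 0)%nat.
Proof.
  induction n; intros i0 r v a Ha HJ; [lia|]. simpl.
  destruct a as [|a].
  - rewrite Nat.add_0_r in HJ. rewrite HJ. simpl. lia.
  - assert (HJ' : J (S i0 + a)%nat = true) by (rewrite <- HJ; f_equal; lia).
    destruct (J i0); simpl.
    + specialize (IHn (S i0) (S r) v a ltac:(lia) HJ'). lia.
    + apply IHn; auto; lia.
Qed.

Lemma build_incr J n : forall i0 r v a b, (a < b)%nat -> (b < n)%nat ->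
  J (i0 + a)%nat = true -> J (i0 + b)%nat = true ->
  (nth a (build J i0 n r v) 0 < nth b (build J i0 n r v) 0)%nat.
Proof.
  induction n; intros i0 r v a b Hab Hb Ha HJb; [lia|]. simpl.
  destruct b as [|b]; [lia|].
  assert (HJb' : J (S i0 + b)%nat = true) by (rewrite <- HJb; f_equal; lia).
  destruct a as [|a].
  - rewrite Nat.add_0_r in Ha. rewrite Ha. simpl.
    pose proof (build_ge J n (S i0) (S r) v b ltac:(lia) HJb'). lia.
  - assert (Ha' : J (S i0 + a)%nat = true) by (rewrite <- Ha; f_equal; lia).
    destruct (J i0); simpl; apply IHn; auto; lia.
Qed.

Definition fc (J : nat -> bool) i0 n := length (filter (fun i => negb (J i)) (seq i0 n)).

Lemma build_inj J n : forall i0 r v w, length v = fc J i0 n -> length w = fc J i0 n ->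
  build J i0 n r v = build J i0 n r w -> v = w.
Proof.
  induction n; intros i0 r v w Hv Hw Heq.
  - unfold fc in *; simpl in *. destruct v; destruct w; simpl in *; try lia; auto.
  - unfold fc in *; simpl in *. destruct (J i0); simpl in *.
    + injection Heq; intros. eapply IHn; eauto.
    + destruct v as [|x v]; destruct w as [|y w]; simpl in *; try lia.
      injection Heq; intros. subst. f_equal. eapply IHn; eauto.
Qed.

Lemma filter_len_sum (f : nat -> bool) l :
  (length (filter f l) + length (filter (fun i => negb (f i)) l))%nat = length l.
Proof. induction l; simpl; auto. destruct (f a); simpl; lia. Qed.

Fixpoint subs (b j : nat) : list (list nat) :=
  match b with
  | O => [[]]
  | S b' => map (cons 0%nat) (subs b' j) ++
            match j with O => [] | S j' => map (cons 1%nat) (subs b' j') end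
  end.

Lemma subs_prop b : forall j v, In v (subs b j) ->
  length v = b /\ Forall (fun x => x <= 1)%nat v /\ (list_sum v <= j)%nat.
Proof.
  induction b; intros j v H; simpl in H.
  - destruct H as [<-|[]]. simpl. repeat split; auto; lia.
  - apply in_app_or in H. destruct H as [H|H].
    + apply in_map_iff in H. destruct H as [u [<- Hu]].
      destruct (IHb j u Hu) as [A [B C]]. simpl. repeat split; auto.
    + destruct j as [|j]; [destruct H|].
      apply in_map_iff in H. destruct H as [u [<- Hu]].
      destruct (IHb j u Hu) as [A [B C]]. simpl. repeat split; auto. lia.
Qed.

Lemma subs_nodup b : forall j, NoDup (subs b j).
Proof.
  induction b; intros j; simpl.
  - constructor; [simpl; tauto|constructor].
  - apply NoDup_app.
    + apply NoDup_map_NoDup_ForallPairs; auto. intros x y _ _ H; injection H; auto.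
    + destruct j; [constructor|].
      apply NoDup_map_NoDup_ForallPairs; auto. intros x y _ _ H; injection H; auto.
    + intros a Ha Hb. destruct j; [destruct Hb|].
      apply in_map_iff in Ha, Hb. destruct Ha as [u [<- _]]. destruct Hb as [w [H _]].
      discriminate.
Qed.

Lemma subs_len_S0 b : length (subs (S b) 0) = length (subs b 0).
Proof. simpl. rewrite app_nil_r, length_map. reflexivity. Qed.
Lemma subs_len_SS b j : length (subs (S b) (S j)) = (length (subs b (S j)) + length (subs b j))%nat.
Proof. simpl. rewrite length_app, !length_map. reflexivity. Qed.

Lemma subs_len0 b : length (subs b 0) = 1%nat.
Proof. induction b; auto. rewrite subs_len_S0; auto. Qed.

Lemma subs_mono b j : (length (subs b j) <= length (subs (S b) j))%nat.
Proof. destruct j. rewrite subs_len_S0; lia. rewrite subs_len_SS; lia. Qed.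

Lemma subs_mono' k b j : (length (subs b j) <= length (subs (k + b) j))%nat.
Proof. induction k; simpl; auto. eapply Nat.le_trans; [apply IHk|]. apply subs_mono. Qed.

Lemma subs_step m b j : (m * length (subs b j) <= length (subs (m + b) (S j)))%nat.
Proof.
  induction m; [simpl; lia|]. rewrite Nat.add_succ_l, subs_len_SS.
  pose proof (subs_mono' m b j). lia.
Qed.

Lemma subs_lower m j : forall b, (m * j <= b)%nat -> (m ^ j <= length (subs b j))%nat.
Proof.
  induction j; intros b Hb.
  - rewrite subs_len0. simpl. lia.
  - replace b with (m + (b - m))%nat by lia.
    pose proof (subs_step m (b - m) j). pose proof (IHj (b - m)%nat ltac:(lia)).
    simpl. pose proof (Nat.mul_le_mono_l _ _ m H0). lia.
Qed.

Lemma fold_mult_c c l : fold_right Rmult c l = c * fold_right Rmult 1 l.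
Proof. induction l; simpl; [ring|]. rewrite IHl; ring. Qed.

Definition Fp (lam : nat -> R) r := fold_right Rmult 1 (map lam (seq 0 r)).

Lemma Fp_S lam r : Fp lam (S r) = Fp lam r * lam r.
Proof. unfold Fp. rewrite seq_S, map_app, fold_right_app. simpl.
  rewrite fold_mult_c. ring. Qed.

Lemma lam_prod_nonneg lam (H : forall m, 0 <= lam m) k : 0 <= lam_prod lam k.
Proof. induction k; simpl; [lra|]. apply Rmult_le_pos; auto. Qed.

Lemma Fp_nonneg lam (H : forall m, 0 <= lam m) r : 0 <= Fp lam r.
Proof. induction r; [unfold Fp; simpl; lra|]. rewrite Fp_S. apply Rmult_le_pos; auto. Qed.

Lemma filter_le (f : nat -> bool) l : (length (filter f l) <= length l)%nat.
Proof. induction l; simpl; auto. destruct (f a); simpl; lia. Qed.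

Lemma build_nil_prod lam J n : forall i0 r,
  Fp lam r * lam_prod lam (build J i0 n r nil) =
  lam 0%nat ^ fc J i0 n * Fp lam (r + length (filter J (seq i0 n))).
Proof.
  induction n; intros i0 r.
  - unfold fc; simpl. rewrite Nat.add_0_r. ring.
  - unfold fc in *; simpl. destruct (J i0); simpl.
    + rewrite <- Rmult_assoc, <- Fp_S, IHn. f_equal. f_equal. lia.
    + replace (Fp lam r * (lam 0%nat * lam_prod lam (build J (S i0) n r [])))
        with (lam 0%nat * (Fp lam r * lam_prod lam (build J (S i0) n r []))) by ring.
      rewrite IHn. ring.
Qed.

Lemma rr_facts lam (Hnn : forall m, 0 <= lam m) (H0 : 0 < lam 0%nat) (H1 : lam 1%nat <= lam 0%nat) :
  0 <= lam 1%nat / lam 0%nat <= 1.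
Proof.
  split. unfold Rdiv; apply Rmult_le_pos; auto. left; apply Rinv_0_lt_compat; auto.
  apply Rmult_le_reg_r with (lam 0%nat); auto. unfold Rdiv. rewrite Rmult_assoc, Rinv_l; lra.
Qed.

Lemma pow_le1 x k : 0 <= x <= 1 -> x ^ k <= 1.
Proof. intros. rewrite <- (pow1 k). apply pow_incr; lra. Qed.

Lemma build_prod_ge lam J n (Hnn : forall m, 0 <= lam m) (H0 : 0 < lam 0%nat) (H1 : lam 1%nat <= lam 0%nat) :
  forall i0 r v, Forall (fun x => x <= 1)%nat v ->
  lam_prod lam (build J i0 n r v) >=
  lam_prod lam (build J i0 n r nil) * (lam 1%nat / lam 0%nat) ^ list_sum v.
Proof.
  induction n; intros i0 r v Hv.
  - simpl. destruct v as [|x v]; simpl; [lra|].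
    pose proof (rr_facts lam Hnn H0 H1). pose proof (pow_le1 _ (x + list_sum v) H). lra.
  - simpl. destruct (J i0); simpl.
    + rewrite Rmult_assoc. apply Rle_ge, Rmult_le_compat_l; auto. apply Rge_le, IHn; auto.
    + destruct v as [|x v]; simpl; [lra|].
      inversion Hv as [|? ? H3 H4]; subst. specialize (IHn (S i0) r v H4).
      assert (Hx : x = 0%nat \/ x = 1%nat) by lia.
      pose proof (lam_prod_nonneg lam Hnn (build J (S i0) n r [])).
      destruct Hx; subst; simpl.
      * rewrite Rmult_assoc. apply Rle_ge, Rmult_le_compat_l; auto; lra.
      * replace (lam 1%nat) with (lam 0%nat * (lam 1%nat / lam 0%nat)) at 1 by (field; lra).
        pose proof (rr_facts lam Hnn H0 H1).
        replace (lam 0%nat * lam_prod lam (build J (S i0) n r []) *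
          (lam 1%nat / lam 0%nat * (lam 1%nat / lam 0%nat) ^ list_sum v))
          with (lam 0%nat * (lam 1%nat / lam 0%nat) * (lam_prod lam (build J (S i0) n r []) * (lam 1%nat / lam 0%nat) ^ list_sum v)) by ring.
        apply Rle_ge, Rmult_le_compat_l; [apply Rmult_le_pos; lra|]. lra.
Qed.

Lemma a_b_card I d : (a_card I d + b_card I d)%nat = d /\ b_card I d = fc (I d) 0 d.
Proof.
  pose proof (filter_len_sum (I d) (seq 0 d)). rewrite length_seq in H.
  unfold b_card, a_card, fc. lia.
Qed.

Lemma init_eq lam I d : lam_prod lam (build (I d) 0 d 0 nil) = init_sq lam I d.
Proof.
  pose proof (build_nil_prod lam (I d) d 0 0). unfold Fp in H at 1. simpl in H.
  rewrite Rmult_1_l in H. rewrite H. unfold init_sq, Fp.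
  destruct (a_b_card I d) as [_ Hb]. rewrite Hb. reflexivity.
Qed.

Lemma exp_le1 x : x <= 0 -> exp x <= 1.
Proof. intros. rewrite <- exp_0. destruct H; [left; apply exp_increasing; auto| subst; lra]. Qed.

Lemma core lam I C p q
  (Hnn : forall m, 0 <= lam m) (H0 : 0 < lam 0%nat) (H1p : 0 < lam 1%nat)
  (H1 : lam 1%nat <= lam 0%nat)
  (init_pos : forall d, (1 <= d)%nat -> 0 < init_sq lam I d)
  (HPT : poly_tractable_with lam I C p q) d m j :
  (1 <= d)%nat -> (m * j <= b_card I d)%nat ->
  INR (m ^ j) <= C * exp (- p * (/2 * ln ((lam 1%nat / lam 0%nat) ^ j / 2))) * Rpower (INR d) q.
Proof.
  intros Hd Hmj.
  set (rr := lam 1%nat / lam 0%nat).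
  assert (Hrr : 0 < rr <= 1).
  { pose proof (rr_facts lam Hnn H0 H1). split; [|tauto].
    unfold rr, Rdiv. apply Rmult_lt_0_compat; auto. apply Rinv_0_lt_compat; auto. }
  set (t := rr ^ j / 2).
  assert (Ht : 0 < t <= /2).
  { unfold t. pose proof (pow_lt rr j ltac:(lra)). pose proof (pow_le1 rr j ltac:(lra)). lra. }
  set (e := Rpower t (/2)).
  assert (He2 : e ^ 2 = t).
  { unfold e. simpl. rewrite Rmult_1_r, <- Rpower_plus.
    replace (/2 + /2) with 1 by field. apply Rpower_1; lra. }
  assert (He : 0 < e <= 1).
  { unfold e, Rpower. split; [apply exp_pos|]. apply exp_le1.
    assert (ln t < 0). { rewrite <- ln_1. apply ln_increasing; lra. } nra. }
  destruct (a_b_card I d) as [Hab Hb].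
  set (L := map (fun v => build (I d) 0 d 0 v) (subs (b_card I d) j)).
  assert (HL := HPT d e Hd He L).
  assert (Hlen : (m ^ j <= length L)%nat).
  { unfold L. rewrite length_map. apply subs_lower; auto. }
  assert (Hle : INR (length L) <= C * Rpower e (- p) * Rpower (INR d) q).
  { apply HL.
    - unfold L. apply NoDup_map_NoDup_ForallPairs; [|apply subs_nodup].
      intros x y Hx Hy Heq. apply subs_prop in Hx, Hy.
      eapply build_inj; [| |exact Heq]; rewrite <- Hb; tauto.
    - intros k Hk. unfold L in Hk. apply in_map_iff in Hk. destruct Hk as [v [<- Hv]].
      apply subs_prop in Hv. destruct Hv as [Hvl [Hvf Hvs]]. split.
      + split; [apply build_length|]. intros i j' Hij Hj Hi Hj'.
        apply build_incr; auto.
      + pose proof (build_prod_ge lam (I d) d Hnn H0 H1 0 0 v Hvf). fold rr in H.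
        rewrite init_eq in H. rewrite He2.
        pose proof (init_pos d Hd).
        assert (rr ^ j <= rr ^ list_sum v).
        { replace j with (list_sum v + (j - list_sum v))%nat by lia. rewrite pow_add.
          pose proof (pow_le1 rr (j - list_sum v) ltac:(lra)).
          pose proof (pow_lt rr (list_sum v) ltac:(lra)). nra. }
        pose proof (pow_lt rr j ltac:(lra)). unfold t. nra. }
  apply le_INR in Hlen.
  replace (Rpower e (-p)) with (exp (- p * (/ 2 * ln t))) in Hle.
  2:{ unfold Rpower at 1. unfold e, Rpower. rewrite ln_exp. reflexivity. }
  lra.
Qed.

Lemma ln_le' x y : 0 < x -> x <= y -> ln x <= ln y.
Proof. intros. destruct H0; [left; apply ln_increasing; auto|subst; lra]. Qed.

Lemma ln2_pos : 0 < ln 2.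
Proof. pose proof ln_lt_2. lra. Qed.

Lemma bnd lam I C p q
  (Hnn : forall m, 0 <= lam m) (H0 : 0 < lam 0%nat) (H1p : 0 < lam 1%nat)
  (H1 : lam 1%nat <= lam 0%nat)
  (init_pos : forall d, (1 <= d)%nat -> 0 < init_sq lam I d)
  (HC : 0 < C) (Hp : 0 < p) (Hq : 0 <= q)
  (HPT : poly_tractable_with lam I C p q) :
  exists c0 c1, 0 <= c1 /\ (q = 0 -> c1 = 0) /\
    forall d, (1 <= d)%nat -> INR (b_card I d) <= c0 + c1 * ln (INR d).
Proof.
  set (rr := lam 1%nat / lam 0%nat).
  assert (Hrr : 0 < rr <= 1).
  { pose proof (rr_facts lam Hnn H0 H1). split; [|tauto].
    unfold rr, Rdiv. apply Rmult_lt_0_compat; auto. apply Rinv_0_lt_compat; auto. }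
  destruct (INR_archimed 1 (2 * exp (- (p/2) * ln rr) + 1) ltac:(lra)) as [m Hm].
  rewrite Rmult_1_r in Hm.
  assert (Hm1 : (1 <= m)%nat).
  { destruct m; [simpl in Hm; pose proof (exp_pos (- (p/2) * ln rr)); lra| lia]. }
  assert (Hmpos : 0 < INR m) by (apply lt_0_INR; lia).
  assert (Hlnm : ln 2 - (p/2) * ln rr < ln (INR m)).
  { replace (ln 2 - (p/2) * ln rr) with (ln (2 * exp (- (p/2) * ln rr))).
    2:{ rewrite ln_mult; [|lra|apply exp_pos]. rewrite ln_exp. ring. }
    apply ln_increasing; [pose proof (exp_pos (- (p/2) * ln rr)); lra|lra]. }
  assert (Hlnrr : ln rr <= 0). { rewrite <- ln_1. apply ln_le'; lra. }
  set (K0 := ln C + (p/2) * ln 2).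
  exists (INR m + INR m / ln 2 * K0), (INR m * q / ln 2).
  pose proof ln2_pos.
  split; [apply Rmult_le_pos; [nra|left; apply Rinv_0_lt_compat; auto]|].
  split; [intros ->; unfold Rdiv; ring|].
  intros d Hd.
  set (b := b_card I d). set (j := (b / m)%nat).
  assert (Hj : (m * j <= b)%nat) by (unfold j; pose proof (Nat.div_mod_eq b m); lia).
  assert (Hb : (b < m * (j+1))%nat).
  { unfold j. pose proof (Nat.div_mod_eq b m). pose proof (Nat.mod_upper_bound b m ltac:(lia)). lia. }
  pose proof (core lam I C p q Hnn H0 H1p H1 init_pos HPT d m j Hd Hj) as Hc.
  fold rr in Hc.
  assert (Hdpos : 0 < INR d) by (apply lt_0_INR; lia).
  assert (Hjl : INR j * ln (INR m) <= ln C + (- p * (/ 2 * ln (rr ^ j / 2))) + q * ln (INR d)).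
  { rewrite pow_INR in Hc. apply ln_le' in Hc; [|apply pow_lt; auto].
    rewrite ln_pow in Hc; auto. unfold Rpower in Hc.
    rewrite !ln_mult, !ln_exp in Hc; try apply exp_pos; auto.
    apply Rmult_lt_0_compat; auto; apply exp_pos. }

  unfold Rdiv in Hjl. rewrite ln_mult in Hjl; [|apply pow_lt; lra|lra].
  rewrite ln_pow in Hjl by lra. rewrite ln_Rinv in Hjl by lra.
  assert (Hj2 : INR j * ln 2 <= K0 + q * ln (INR d)).
  { unfold K0. pose proof (pos_INR j).
    assert (INR j * (ln 2 - (p/2) * ln rr) <= INR j * ln (INR m)) by (apply Rmult_le_compat_l; lra).
    nra. }
  apply lt_INR in Hb. rewrite mult_INR, plus_INR in Hb. simpl in Hb.
  assert (INR j <= (K0 + q * ln (INR d)) / ln 2).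
  { apply Rmult_le_reg_r with (ln 2); auto. unfold Rdiv. rewrite Rmult_assoc, Rinv_l; lra. }
  fold b.
  assert (INR m * INR j <= INR m * ((K0 + q * ln (INR d)) / ln 2)) by (apply Rmult_le_compat_l; lra).
  unfold Rdiv in *. nra.
Qed.

Lemma ln_le_xm1 x : 0 < x -> ln x <= x - 1.
Proof. intros. pose proof (exp_ineq1_le (ln x)). rewrite exp_ln in H0; lra. Qed.

Lemma tele s x : 1 < s -> 1 <= x ->
  exp (- s * ln (x + 1)) <= (exp ((1 - s) * ln x) - exp ((1 - s) * ln (x+1))) / (s - 1).
Proof.
  intros Hs Hx. set (y := x + 1).
  assert (Hy : 0 < y) by (unfold y; lra).
  assert (Hl : 1 / y <= ln y - ln x).
  { pose proof (ln_le_xm1 (x / y) ltac:(apply Rdiv_lt_0_compat; lra)).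
    unfold Rdiv in H. rewrite ln_mult, ln_Rinv in H; try lra.
    2:{ apply Rinv_0_lt_compat; lra. }
    replace (x * / y) with (1 - 1/y) in H by (unfold y; field; lra). lra. }
  apply Rmult_le_reg_r with (s - 1); [lra|]. unfold Rdiv. rewrite Rmult_assoc, Rinv_l, Rmult_1_r by lra.
  assert (E1 : exp (- s * ln y) = exp ((1 - s) * ln y) * (1 / y)).
  { replace (- s * ln y) with ((1 - s) * ln y + - ln y) by ring. rewrite exp_plus.
    rewrite <- ln_Rinv by lra. rewrite exp_ln by (apply Rinv_0_lt_compat; lra). unfold Rdiv; ring. }
  assert (E2 : exp ((1 - s) * ln x) = exp ((1 - s) * ln y) * exp ((s - 1) * (ln y - ln x))).
  { rewrite <- exp_plus. f_equal. ring. }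
  rewrite E1, E2.
  pose proof (exp_ineq1_le ((s - 1) * (ln y - ln x))).
  pose proof (exp_pos ((1 - s) * ln y)).
  assert ((s-1) * (1/y) <= (s - 1) * (ln y - ln x)) by (apply Rmult_le_compat_l; lra).
  nra.
Qed.

Lemma pseries s N : 1 < s ->
  sum_f_R0 (fun m => exp (- s * ln (INR (S m)))) N <= 1 + (1 - exp ((1 - s) * ln (INR (S N)))) / (s - 1).
Proof.
  intros Hs. induction N.
  - simpl. rewrite ln_1, !Rmult_0_r, exp_0. unfold Rdiv. lra.
  - rewrite tech5. pose proof (tele s (INR (S N)) Hs ltac:(apply (le_INR 1); lia)).
    rewrite <- S_INR in H. unfold Rdiv in *. lra.
Qed.

Lemma lam_mono lam (H : forall m, lam (S m) <= lam m) i m : (i <= m)%nat -> lam m <= lam i.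
Proof. induction 1; [lra|]. specialize (H m). lra. Qed.

Lemma init1 lam I (I1 : I 1%nat 0%nat = true) : init_sq lam I 1 = lam 0%nat.
Proof. unfold init_sq, b_card, a_card. simpl. rewrite I1. simpl. ring. Qed.

Lemma lam_bound lam I C p q
  (Hnn : forall m, 0 <= lam m) (Hni : forall m, lam (S m) <= lam m)
  (H0 : 0 < lam 0%nat) (I1 : I 1%nat 0%nat = true)
  (HC : 0 < C) (Hp : 0 < p)
  (HPT : poly_tractable_with lam I C p q) m :
  lam m <= 2 * lam 0%nat * exp ((2/p) * ln C) * exp (- (2/p) * ln (INR (S m))).
Proof.
  destruct (Hnn m) as [Hm|Hm].
  2:{ rewrite <- Hm. pose proof (exp_pos ((2/p) * ln C)). pose proof (exp_pos (- (2/p) * ln (INR (S m)))).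
      apply Rmult_le_pos; [|lra]. apply Rmult_le_pos; lra. }
  assert (Hm0 : lam m <= lam 0%nat) by (apply lam_mono; auto; lia).
  set (t := lam m / (2 * lam 0%nat)).
  assert (Ht : 0 < t <= /2).
  { unfold t. split. apply Rdiv_lt_0_compat; lra.
    apply Rmult_le_reg_r with (2 * lam 0%nat); [lra|]. unfold Rdiv. rewrite Rmult_assoc, Rinv_l; lra. }
  set (e := Rpower t (/2)).
  assert (He2 : e ^ 2 = t).
  { unfold e. simpl. rewrite Rmult_1_r, <- Rpower_plus.
    replace (/2 + /2) with 1 by field. apply Rpower_1; lra. }
  assert (He : 0 < e <= 1).
  { unfold e, Rpower. split; [apply exp_pos|]. apply exp_le1.
    assert (ln t < 0). { rewrite <- ln_1. apply ln_increasing; lra. } nra. }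
  assert (HL := HPT 1%nat e (le_n 1) He (map (fun i => [i]) (seq 0 (S m)))).
  rewrite init1 in HL by auto. rewrite length_map, length_seq in HL.
  assert (Hle : INR (S m) <= C * Rpower e (- p) * Rpower (INR 1) q).
  { apply HL.
    - apply NoDup_map_NoDup_ForallPairs; [|apply seq_NoDup].
      intros x y _ _ Hxy; injection Hxy; auto.
    - intros k Hk. apply in_map_iff in Hk. destruct Hk as [i [<- Hi]].
      apply in_seq in Hi. split.
      + split; [reflexivity|]. intros; lia.
      + simpl lam_prod. rewrite Rmult_1_r, He2. assert (lam m <= lam i) by (apply lam_mono; auto; lia).
        unfold t. replace (lam m / (2 * lam 0%nat) * lam 0%nat) with (lam m / 2) by (field; lra). lra. }
  unfold Rpower at 2 in Hle. change (INR 1) with 1 in Hle. rewrite ln_1, Rmult_0_r, exp_0, Rmult_1_r in Hle.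
  unfold e, Rpower in Hle. rewrite ln_exp in Hle.
  assert (Hsm : 0 < INR (S m)) by (apply lt_0_INR; lia).
  apply ln_le' in Hle; auto. rewrite ln_mult, ln_exp in Hle; [|lra|apply exp_pos].
  assert (Hlt : ln t <= (2/p) * ln C - (2/p) * ln (INR (S m))).
  { apply Rmult_le_reg_l with (p/2); [lra|].
    replace (p / 2 * (2 / p * ln C - 2 / p * ln (INR (S m)))) with (ln C - ln (INR (S m))) by (field; lra).
    nra. }
  assert (t <= exp ((2/p) * ln C) * exp (- (2/p) * ln (INR (S m)))).
  { rewrite <- exp_plus. rewrite <- (exp_ln t) by lra.
    destruct (Req_dec (ln t) ((2 / p) * ln C + - (2 / p) * ln (INR (S m)))) as [Heq|Hne].
    - rewrite Heq; lra.
    - left. apply exp_increasing. lra. }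
  replace (lam m) with (2 * lam 0%nat * t) by (unfold t; field; lra).
  set (A := exp (2 / p * ln C)) in *. set (B := exp (- (2 / p) * ln (INR (S m)))) in *. nra.
Qed.

Lemma exp_le' x y : x <= y -> exp x <= exp y.
Proof. intros [H|H]; [left; apply exp_increasing; auto|subst; lra]. Qed.

Lemma rpow0_nonneg x t : 0 <= rpow0 x t.
Proof. unfold rpow0. destruct (Rlt_dec 0 x); [unfold Rpower; left; apply exp_pos|lra]. Qed.

Lemma claim1 lam I C p q
  (Hnn : forall m, 0 <= lam m) (Hni : forall m, lam (S m) <= lam m)
  (H0 : 0 < lam 0%nat) (I1 : I 1%nat 0%nat = true)
  (HC : 0 < C) (Hp : 0 < p)
  (HPT : poly_tractable_with lam I C p q) :
  forall tau, p / 2 < tau -> exists l, infinite_sum (fun m => rpow0 (lam m) tau) l.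
Proof.
  intros tau Ht.
  set (D := 2 * lam 0%nat * exp ((2/p) * ln C)).
  assert (HD : 0 < D) by (unfold D; pose proof (exp_pos ((2/p) * ln C)); nra).
  set (s := tau * (2/p)).
  assert (Hs : 1 < s).
  { unfold s. apply Rmult_lt_reg_r with (p/2); [lra|].
    replace (tau * (2 / p) * (p / 2)) with tau by (field; lra). lra. }
  assert (Htau : 0 < tau) by lra.
  set (K := exp (tau * ln D)).
  assert (Hb : forall m, rpow0 (lam m) tau <= K * exp (- s * ln (INR (S m)))).
  { intro m. unfold rpow0. destruct (Rlt_dec 0 (lam m)) as [Hm|Hm].
    - pose proof (lam_bound lam I C p q Hnn Hni H0 I1 HC Hp HPT m) as Hl. fold D in Hl.

      apply ln_le' in Hl; auto. rewrite ln_mult, ln_exp in Hl; auto; [|apply exp_pos].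
      unfold Rpower, K. rewrite <- exp_plus. apply exp_le'.
      assert (tau * ln (lam m) <= tau * (ln D + - (2 / p) * ln (INR (S m)))) by (apply Rmult_le_compat_l; lra).
      unfold s. lra.
    - pose proof (exp_pos (- s * ln (INR (S m)))). unfold K; pose proof (exp_pos (tau * ln D)). nra. }
  destruct (growing_cv (fun N => sum_f_R0 (fun m => rpow0 (lam m) tau) N)) as [l Hl].
  - intro n. rewrite tech5. pose proof (rpow0_nonneg (lam (S n)) tau). lra.
  - exists (K * (1 + 1 / (s - 1))). intros x [N ->].
    eapply Rle_trans. { apply sum_Rle. intros n _. apply Hb. }
    rewrite (sum_eq _ (fun m => exp (- s * ln (INR (S m))) * K)) by (intros; ring). rewrite <- scal_sum.
    pose proof (pseries s N Hs). pose proof (exp_pos ((1 - s) * ln (INR (S N)))).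
    apply Rmult_le_compat_l; [unfold K; left; apply exp_pos|].
    unfold Rdiv in *. assert (0 < / (s - 1)) by (apply Rinv_0_lt_compat; lra). nra.
  - exists l. exact Hl.
Qed.

Lemma ln_le_sqrt x : 0 < x -> ln x <= 2 * sqrt x.
Proof.
  intros Hx. pose proof (sqrt_lt_R0 x Hx).
  rewrite <- (sqrt_sqrt x) at 1 by lra. rewrite ln_mult by lra.
  pose proof (ln_le_xm1 (sqrt x) H). lra.
Qed.

Lemma b_sqrt I c0 c1 (Hc1 : 0 <= c1)
  (Hb : forall d, (1 <= d)%nat -> INR (b_card I d) <= c0 + c1 * ln (INR d)) d :
  (1 <= d)%nat -> INR (b_card I d) <= (Rabs c0 + 2 * c1) * sqrt (INR d).
Proof.
  intros Hd. assert (H1 : 1 <= INR d) by (apply (le_INR 1); lia).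
  assert (Hs : 1 <= sqrt (INR d)) by (rewrite <- sqrt_1; apply sqrt_le_1_alt; lra).
  pose proof (ln_le_sqrt (INR d) ltac:(lra)). pose proof (Hb d Hd).
  pose proof (Rle_abs c0).
  assert (c1 * ln (INR d) <= c1 * (2 * sqrt (INR d))) by (apply Rmult_le_compat_l; lra).
  assert (Rabs c0 <= Rabs c0 * sqrt (INR d)) by (pose proof (Rabs_pos c0); nra).
  nra.
Qed.

Lemma claim4 I c0 c1 (Hc1 : 0 <= c1)
  (Hb : forall d, (1 <= d)%nat -> INR (b_card I d) <= c0 + c1 * ln (INR d)) :
  Un_cv (fun d => INR (a_card I d) / INR d) 1.
Proof.
  intros eps Heps. set (G := Rabs c0 + 2 * c1).
  assert (HG : 0 <= G) by (unfold G; pose proof (Rabs_pos c0); lra).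
  destruct (INR_archimed 1 ((G / eps) ^ 2) ltac:(lra)) as [N HN]. rewrite Rmult_1_r in HN.
  exists (S N). intros d Hd.
  assert (Hd1 : (1 <= d)%nat) by lia.
  assert (H1 : 1 <= INR d) by (apply (le_INR 1); lia).
  assert (HdN : INR N <= INR d) by (apply le_INR; lia).
  pose proof (b_sqrt I c0 c1 Hc1 Hb d Hd1) as Hbd. fold G in Hbd.
  destruct (a_b_card I d) as [Hab _].
  assert (Ha : INR (a_card I d) = INR d - INR (b_card I d)).
  { assert (INR (a_card I d + b_card I d) = INR d) by (rewrite Hab; auto).
    rewrite plus_INR in H. lra. }
  unfold Rdist. rewrite Ha.
  set (sd := sqrt (INR d)).
  assert (Hsd : sd * sd = INR d) by (apply sqrt_sqrt; lra).
  assert (Hsd1 : 1 <= sd) by (unfold sd; rewrite <- sqrt_1; apply sqrt_le_1_alt; lra).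
  assert (HGe : G / eps < sd).
  { unfold sd. rewrite <- (sqrt_pow2 (G / eps)). 2:{ unfold Rdiv; apply Rmult_le_pos; [lra|left; apply Rinv_0_lt_compat; lra]. }
    apply sqrt_lt_1; [apply pow2_ge_0|lra|lra]. }
  assert (HG' : G < eps * sd).
  { apply Rmult_lt_compat_l with (r := eps) in HGe; auto. unfold Rdiv in HGe.
    rewrite <- Rmult_assoc, (Rmult_comm eps G), Rmult_assoc, Rinv_r, Rmult_1_r in HGe; lra. }
  replace ((INR d - INR (b_card I d)) / INR d - 1) with (- (INR (b_card I d) / INR d)) by (field; lra).
  rewrite Rabs_Ropp. pose proof (pos_INR (b_card I d)).
  rewrite Rabs_right by (apply Rle_ge; unfold Rdiv; apply Rmult_le_pos; [lra|left; apply Rinv_0_lt_compat; lra]).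
  apply Rmult_lt_reg_r with (INR d); [lra|]. unfold Rdiv. rewrite Rmult_assoc, Rinv_l, Rmult_1_r by lra.
  rewrite <- Hsd. fold sd in Hbd. assert (G * sd < eps * sd * sd) by (apply Rmult_lt_compat_r; lra). lra.
Qed.

Definition Ms (cs : list R) := fold_right (fun c a => Rabs c + a) 0 cs.

Lemma Ms_nonneg cs : 0 <= Ms cs.
Proof. induction cs; simpl; [lra|]. pose proof (Rabs_pos a). lra. Qed.

Lemma poly_abs cs x : 0 <= x -> Rabs (poly_eval cs x) <= Ms cs * (1 + x) ^ length cs.
Proof.
  intros Hx. induction cs as [|c cs IH]; simpl; [rewrite Rabs_R0; lra|].
  eapply Rle_trans; [apply Rabs_triang|]. rewrite Rabs_mult, (Rabs_right x) by lra.
  pose proof (Ms_nonneg cs). pose proof (Rabs_pos c).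
  assert (1 <= (1 + x) ^ length cs) by (apply pow_R1_Rle; lra).
  assert (x * Rabs (poly_eval cs x) <= x * (Ms cs * (1 + x) ^ length cs)) by (apply Rmult_le_compat_l; lra).
  set (P := (1 + x) ^ length cs) in *.
  assert (Rabs c * 1 <= Rabs c * ((1 + x) * P)) by (apply Rmult_le_compat_l; nra).
  assert (x * (Ms cs * P) <= Ms cs * ((1 + x) * P)) by nra.
  lra.
Qed.

Lemma poly_bound cs x : 0 <= x -> poly_eval cs x <= Ms cs * exp (INR (length cs) * ln (1 + x)).
Proof.
  intros Hx. eapply Rle_trans; [apply Rle_abs|]. eapply Rle_trans; [apply poly_abs; auto|].
  rewrite <- ln_pow by lra. rewrite exp_ln by (apply pow_lt; lra). lra.
Qed.

Lemma Fp_bound lam (Hnn : forall m, 0 <= lam m) (Hni : forall m, lam (S m) <= lam m)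
  (Hcv : Un_cv lam 0) :
  exists Hc, 0 < Hc /\ forall n, Fp lam n <= Hc * exp (- INR n).
Proof.
  destruct (Hcv (exp (-1)) ltac:(apply Rlt_gt, exp_pos)) as [J0 HJ].
  set (L := Rmax 1 (lam 0%nat)).
  assert (HL1 : 1 <= L) by apply Rmax_l.
  assert (HL : forall i, lam i <= L).
  { intro i. eapply Rle_trans; [apply (lam_mono lam Hni 0 i); lia|apply Rmax_r]. }
  set (M := L * exp 1).
  assert (HM : 1 <= M).
  { unfold M. pose proof (exp_ineq1_le 1). nra. }
  exists (M ^ J0). split; [apply pow_lt; lra|].
  assert (Hg : forall n, Fp lam n <= M ^ (Nat.min n J0) * exp (- INR n)).
  { induction n.
    - unfold Fp; simpl. rewrite Ropp_0, exp_0. lra.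
    - rewrite Fp_S. rewrite S_INR.
      replace (exp (- (INR n + 1))) with (exp (- INR n) * exp (-1)) by (rewrite <- exp_plus; f_equal; ring).
      pose proof (Fp_nonneg lam Hnn n). pose proof (Hnn n). pose proof (exp_pos (- INR n)).
      pose proof (exp_pos (-1)).
      destruct (Compare_dec.le_lt_dec J0 n) as [Hn|Hn].
      + replace (Nat.min (S n) J0) with (Nat.min n J0) by lia.
        specialize (HJ n Hn). unfold Rdist in HJ. rewrite Rminus_0_r, Rabs_right in HJ by lra.
        pose proof (pow_le (M) (Nat.min n J0) ltac:(lra)).
        apply Rle_trans with (M ^ Nat.min n J0 * exp (- INR n) * lam n).
        * apply Rmult_le_compat_r; auto.
        * rewrite Rmult_assoc. apply Rmult_le_compat_l; [nra|]. nra.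
      + replace (Nat.min (S n) J0) with (S (Nat.min n J0)) by lia.
        pose proof (pow_le (M) (Nat.min n J0) ltac:(lra)).
        apply Rle_trans with (M ^ Nat.min n J0 * exp (- INR n) * lam n).
        * apply Rmult_le_compat_r; auto.
        * simpl pow. specialize (HL n).
          assert (lam n <= M * exp (-1)).
          { unfold M. rewrite Rmult_assoc, <- exp_plus. replace (1 + -1) with 0 by ring. rewrite exp_0. lra. }
          set (A := M ^ Nat.min n J0) in *. set (B := exp (- INR n)) in *.
          replace (M * A * (B * exp (-1))) with (A * B * (M * exp (-1))) by ring.
          apply Rmult_le_compat_l; nra. }
  intro n. eapply Rle_trans; [apply Hg|]. apply Rmult_le_compat_r; [left; apply exp_pos|].
  apply Rle_pow; auto. lia.
Qed.

Lemma claim2 lam I c0 c1 (Hc1 : 0 <= c1)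
  (Hb : forall d, (1 <= d)%nat -> INR (b_card I d) <= c0 + c1 * ln (INR d))
  (Hnn : forall m, 0 <= lam m) (Hni : forall m, lam (S m) <= lam m)
  (Hcv : Un_cv lam 0) (H0 : 0 < lam 0%nat)
  (init_pos : forall d, (1 <= d)%nat -> 0 < init_sq lam I d) :
  forall cs : list R, (forall n : nat, (1 <= n)%nat -> 0 < poly_eval cs (INR n)) ->
        Un_cv (fun d => init_sq lam I d * poly_eval cs (INR d)) 0.
Proof.
  intros cs Hcs.
  destruct (Fp_bound lam Hnn Hni Hcv) as [Hc [Hcp HF]].
  set (L := Rmax 1 (lam 0%nat)).
  assert (HL1 : 1 <= L) by apply Rmax_l.
  assert (HlnL : 0 <= ln L) by (rewrite <- ln_1; apply ln_le'; lra).
  assert (Hinit : forall d, (1 <= d)%nat ->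
     init_sq lam I d <= Hc * exp ((c0 + c1 * ln (INR d)) * (ln L + 1) - INR d)).
  { intros d Hd. unfold init_sq. change (fold_right Rmult 1 (map lam (seq 0 (a_card I d)))) with (Fp lam (a_card I d)).
    destruct (a_b_card I d) as [Hab _].
    assert (Ha : INR (a_card I d) = INR d - INR (b_card I d)).
    { assert (INR (a_card I d + b_card I d) = INR d) by (rewrite Hab; auto).
      rewrite plus_INR in H. lra. }
    assert (E1 : lam 0%nat ^ b_card I d <= exp (INR (b_card I d) * ln L)).
    { rewrite <- ln_pow by lra. rewrite exp_ln by (apply pow_lt; lra).
      apply pow_incr. split; [lra|apply Rmax_r]. }
    pose proof (HF (a_card I d)) as E2. rewrite Ha in E2.
    pose proof (Fp_nonneg lam Hnn (a_card I d)).
    eapply Rle_trans. { apply Rmult_le_compat; [apply pow_le; lra|auto|exact E1|exact E2]. }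
    replace (exp (INR (b_card I d) * ln L) * (Hc * exp (- (INR d - INR (b_card I d)))))
      with (Hc * exp (INR (b_card I d) * ln L + - (INR d - INR (b_card I d)))) by (rewrite exp_plus; ring).
    apply Rmult_le_compat_l; [lra|].
    apply exp_le'. pose proof (Hb d Hd).
    assert (INR (b_card I d) * (ln L + 1) <= (c0 + c1 * ln (INR d)) * (ln L + 1)) by (apply Rmult_le_compat_r; lra).
    lra. }
  set (n := INR (length cs)).
  assert (Hn : 0 <= n) by apply pos_INR.
  set (c2 := c1 * (ln L + 1) + n).
  assert (Hc2 : 0 <= c2) by (unfold c2; nra).
  set (Hp := Hc * Ms cs + 1).
  assert (HHp : 0 < Hp) by (unfold Hp; pose proof (Ms_nonneg cs); nra).
  intros eps Heps.
  set (T := c0 * (ln L + 1) + 1 - ln (eps / Hp)).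
  destruct (INR_archimed 1 (2 * Rabs T + 16 * c2 ^ 2) ltac:(lra)) as [N HN]. rewrite Rmult_1_r in HN.
  exists (S N). intros d Hd.
  assert (Hd1 : (1 <= d)%nat) by lia.
  assert (HdN : INR N <= INR d) by (apply le_INR; lia).
  assert (Hdp : 1 <= INR d) by (apply (le_INR 1); lia).
  pose proof (init_pos d Hd1). pose proof (Hcs d Hd1).
  unfold Rdist. rewrite Rminus_0_r, Rabs_right by (apply Rle_ge, Rmult_le_pos; lra).
  pose proof (poly_bound cs (INR d) ltac:(lra)) as HP. fold n in HP.
  pose proof (Hinit d Hd1) as HI.
  set (E := (c0 + c1 * ln (INR d)) * (ln L + 1) - INR d + n * ln (1 + INR d)).
  assert (Hprod : init_sq lam I d * poly_eval cs (INR d) <= Hp * exp E).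
  { eapply Rle_trans. { apply Rmult_le_compat; [lra|lra|exact HI|exact HP]. }
    unfold E. rewrite exp_plus.
    pose proof (exp_pos ((c0 + c1 * ln (INR d)) * (ln L + 1) - INR d)).
    pose proof (exp_pos (n * ln (1 + INR d))). pose proof (Ms_nonneg cs).
    set (X := exp ((c0 + c1 * ln (INR d)) * (ln L + 1) - INR d)) in *.
    set (Y := exp (n * ln (1 + INR d))) in *.
    replace (Hc * X * (Ms cs * Y)) with ((Hc * Ms cs) * (X * Y)) by ring.
    unfold Hp. apply Rmult_le_compat_r; nra. }
  set (y := sqrt (1 + INR d)).
  assert (Hy : y * y = 1 + INR d) by (apply sqrt_sqrt; lra).
  assert (Hy0 : 0 <= y) by apply sqrt_pos.
  assert (HlnE : ln (INR d) <= ln (1 + INR d)) by (apply ln_le'; lra).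
  assert (Hl1 : ln (1 + INR d) <= 2 * y) by (apply ln_le_sqrt; lra).
  assert (HE : E <= c0 * (ln L + 1) + c2 * (2 * y) - INR d).
  { unfold E, c2.
    assert (c1 * (ln L + 1) * ln (INR d) <= c1 * (ln L + 1) * ln (1 + INR d)) by (apply Rmult_le_compat_l; nra).
    assert ((c1 * (ln L + 1) + n) * ln (1 + INR d) <= (c1 * (ln L + 1) + n) * (2 * y)) by (apply Rmult_le_compat_l; nra).
    nra. }
  assert (Hy4 : 4 * c2 <= y).
  { destruct (Rle_lt_dec (4 * c2) y) as [?|Hlt]; auto.
    assert (y * y <= 16 * c2 ^ 2) by nra. pose proof (Rabs_pos T). lra. }
  assert (HT : T < y * y / 2) by (pose proof (Rle_abs T); pose proof (pow2_ge_0 c2); lra).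
  assert (HE2 : E < ln (eps / Hp)).
  { unfold T in HT. nra. }
  apply Rle_lt_trans with (Hp * exp E); auto.
  replace eps with (Hp * exp (ln (eps / Hp))).
  2:{ rewrite exp_ln. field; lra. apply Rdiv_lt_0_compat; lra. }
  apply Rmult_lt_compat_l; auto. apply exp_increasing; auto.
Qed.

Theorem proposition10 (lam : nat -> R) (I : nat -> nat -> bool) (C p q : R)
  (lam_nonneg : forall m, 0 <= lam m)
  (lam_noninc : forall m, lam (S m) <= lam m)
  (lam_to0 : Un_cv lam 0)
  (lam2_pos : 0 < lam 1%nat)
  (I1 : I 1%nat 0%nat = true)
  (I_nonempty : forall d, (1 <= d)%nat -> exists i, (i < d)%nat /\ I d i = true)
  (init_pos : forall d, (1 <= d)%nat -> 0 < init_sq lam I d)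
  (HC : 0 < C) (Hp : 0 < p) (Hq : 0 <= q)
  (HPT : poly_tractable_with lam I C p q) :
  (forall tau, p / 2 < tau -> exists l, infinite_sum (fun m => rpow0 (lam m) tau) l)
  /\ (forall cs : list R, (forall n : nat, (1 <= n)%nat -> 0 < poly_eval cs (INR n)) ->
        Un_cv (fun d => init_sq lam I d * poly_eval cs (INR d)) 0)
  /\ (exists K : R, exists d0 : nat, forall d, (d0 <= d)%nat ->
        INR (b_card I d) <= K * ln (INR d))
  /\ Un_cv (fun d => INR (a_card I d) / INR d) 1
  /\ (strongly_poly_tractable lam I -> exists K : nat, forall d, (b_card I d <= K)%nat).
Proof.
  assert (H1 : lam 1%nat <= lam 0%nat) by apply lam_noninc.
  assert (H0 : 0 < lam 0%nat) by lra.
  destruct (bnd lam I C p q lam_nonneg H0 lam2_pos H1 init_pos HC Hp Hq HPT) as [c0 [c1 [Hc1 [_ Hb]]]].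
  split; [exact (claim1 lam I C p q lam_nonneg lam_noninc H0 I1 HC Hp HPT)|].
  split; [exact (claim2 lam I c0 c1 Hc1 Hb lam_nonneg lam_noninc lam_to0 H0 init_pos)|].
  split.
  { exists (Rabs c0 + c1), 3%nat. intros d Hd.
    assert (H3 : 3 <= INR d) by (apply (le_INR 3) in Hd; simpl in Hd; lra).
    assert (Hl : 1 <= ln (INR d)).
    { rewrite <- (ln_exp 1). apply ln_le'; [apply exp_pos|]. pose proof exp_le_3. lra. }
    pose proof (Hb d ltac:(lia)). pose proof (Rle_abs c0).
    assert (Rabs c0 <= Rabs c0 * ln (INR d)) by (pose proof (Rabs_pos c0); nra).
    nra. }
  split; [exact (claim4 I c0 c1 Hc1 Hb)|].
  intros [C' [p' [HC' [Hp' HPT']]]].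
  destruct (bnd lam I C' p' 0 lam_nonneg H0 lam2_pos H1 init_pos HC' Hp' (Rle_refl 0) HPT')
    as [c0' [c1' [_ [Hz Hb']]]].
  rewrite (Hz eq_refl) in Hb'.
  destruct (INR_archimed 1 c0' ltac:(lra)) as [K HK]. rewrite Rmult_1_r in HK.
  exists K. intros d. destruct d as [|d].
  - unfold b_card. simpl. lia.
  - pose proof (Hb' (S d) ltac:(lia)). apply INR_le. lra.
Qed.
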